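(* Let $X$ be a compact metric space and let $f\colon X\to X$ be a homeomorphism which is positively $n$-expansive (for some integer $n\geq 1$) and has the L-shadowing property. Then $X$ is finite.
   Context: Let $(X,d)$ be a metric space and $f\colon X\to X$. For $x\in X$ and $c>0$, the local stable set of size $c$ is $W^s_c(x)=\{y\in X: d(f^k(y),f^k(x))\leq c \text{ for every } k\geq 0\}$. The map $f$ is positively $n$-expansive if there exists $c>0$ such that for every $x\in X$ the set $W^s_c(x)$ contains at most $n$ distinct points. For $\delta>0$, a sequence $(x_k)_{k\in\mathbb{Z}}\subset X$ is a $\delta$-pseudo orbit if $d(f(x_k),x_{k+1})<\delta$ for all $k$; it is a two-sided limit pseudo orbit if $d(f(x_k),x_{k+1})\to 0$ as $|k|\to\infty$. A point $z$ $\varepsilon$-shadows $(x_k)_{k\in\mathbb{Z}}$ if $d(f^k(z),x_k)<\varepsilon$ for all $k\in\mathbb{Z}$, and $z$ two-sided limit shadows $(x_k)$ if $d(f^k(z),x_k)\to0$ as $|k|\to\infty$. A homeomorphism $f$ has the L-shadowing property if for every $\varepsilon>0$ there is $\delta>0$ such that every $\delta$-pseudo orbit $(x_k)_{k\in\mathbb{Z}}$ which is also a two-sided limit pseudo orbit is both $\varepsilon$-shadowed and two-sided limit shadowed by one and the same point $z\in X$. *)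

(* Defs.v *)
From HB Require Import structures.
From mathcomp Require Import all_boot all_order all_algebra.
From mathcomp Require Import all_classical all_reals all_analysis.
Set Implicit Arguments. Unset Strict Implicit. Unset Printing Implicit Defensive.
Import Order.TTheory GRing.Theory Num.Theory.
Local Open Scope classical_set_scope.
Local Open Scope ring_scope.

Section Defs.
Context {R : realType} {X : metricType R}.
Local Notation d := (@mdist R X).

Definition stable_set (f : X -> X) (c : R) (x : X) : set X :=
  [set y | forall k : nat, d (iter k f y) (iter k f x) <= c].

Definition pos_n_expansive (f : X -> X) (n : nat) : Prop :=
  exists2 c : R, 0 < c & forall x : X, forall s : seq X,
    uniq s -> (forall y, y \in s -> stable_set f c x y) -> (size s <= n)%N.

(* f^k for k : int, where g is the inverse of f *)
Definition iterz (f g : X -> X) (k : int) : X -> X :=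
  match k with
  | Posz m => iter m f
  | Negz m => iter m.+1 g
  end.

Definition pseudo_orbit (f : X -> X) (delta : R) (xs : int -> X) : Prop :=
  forall k : int, d (f (xs k)) (xs (k + 1)) < delta.

Definition limit_pseudo_orbit (f : X -> X) (xs : int -> X) : Prop :=
  forall e : R, 0 < e -> exists N : nat, forall k : int,
    (N <= `|k|)%N -> d (f (xs k)) (xs (k + 1)) < e.

Definition eps_shadows (f g : X -> X) (eps : R) (z : X) (xs : int -> X) : Prop :=
  forall k : int, d (iterz f g k z) (xs k) < eps.

Definition limit_shadows (f g : X -> X) (z : X) (xs : int -> X) : Prop :=
  forall e : R, 0 < e -> exists N : nat, forall k : int,
    (N <= `|k|)%N -> d (iterz f g k z) (xs k) < e.

Definition L_shadowing (f g : X -> X) : Prop :=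
  forall eps : R, 0 < eps -> exists2 delta : R, 0 < delta &
    forall xs : int -> X, pseudo_orbit f delta xs -> limit_pseudo_orbit f xs ->
      exists z : X, eps_shadows f g eps z xs /\ limit_shadows f g z xs.

End Defs.

(* Main.v *)
Require Import Defs.
From HB Require Import structures.
From mathcomp Require Import all_boot all_order all_algebra.
From mathcomp Require Import all_classical all_reals all_analysis.
From mathcomp Require Import finmap zify lra.
Import Order.TTheory GRing.Theory Num.Theory.
Local Open Scope classical_set_scope.
Local Open Scope ring_scope.

Lemma iter_canK (T : Type) (f g : T -> T) : cancel f g ->
  forall m x, iter m g (iter m f x) = x.
Proof.
move=> fgK; elim=> [//|m IH] x.
by rewrite iterSr [iter m.+1 f x]iterS fgK IH.
Qed.

Lemma iter_back (T : Type) (f g : T -> T) : cancel f g ->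
  forall k t x, (k <= t)%N -> iter (t - k) g (iter t f x) = iter k f x.
Proof.
move=> fgK k t x kt.
by rewrite -{2}(subnK kt) iterD iter_canK.
Qed.

Lemma fin_bound (I : eqType) (r : seq I) (P : I -> nat -> Prop) :
  (forall i, i \in r -> exists T, forall t, (T <= t)%N -> P i t) ->
  exists T, forall i, i \in r -> forall t, (T <= t)%N -> P i t.
Proof.
elim: r => [|a r IH] H; first by exists 0%N.
have [Ta HTa] := H a (mem_head _ _).
have [Tr HTr] : exists T, forall i, i \in r -> forall t, (T <= t)%N -> P i t.
  by apply: IH => i ir; apply: H; rewrite inE ir orbT.
exists (maxn Ta Tr) => i; rewrite inE => /orP[/eqP ->|ir] t; rewrite geq_max => /andP[h1 h2].
  exact: HTa.
exact: HTr.
Qed.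

Lemma pigeon (T U : eqType) (h : T -> U) (E : seq U) (s : seq T) n :
  (forall e, e \in E -> (count (fun a => h a == e) s <= n)%N) ->
  (count (fun a => h a \in E) s <= size E * n)%N.
Proof.
elim: E => [|e E IH] H.
  by rewrite (eq_count (a2 := pred0)) ?count_pred0 // => a; rewrite in_nil.
rewrite (eq_count (a2 := predU (fun a => h a == e) (fun a => h a \in E))); last first.
  by move=> a; rewrite /= inE.
have := count_predUI (fun a => h a == e) (fun a => h a \in E) s.
have h1 := H e (mem_head _ _).
have h2 : (count (fun a => h a \in E) s <= size E * n)%N.
  by apply: IH => e' e'E; apply: H; rewrite inE e'E orbT.
rewrite /= mulSn; lia.
Qed.

Section Comb.
Context {R : realType} {X : metricType R}.
Variables (f g : X -> X) (c : R) (n : nat).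
Hypothesis fgK : cancel f g.
Hypothesis expans : forall x : X, forall s : seq X,
    uniq s -> (forall y, y \in s -> stable_set f c x y) -> (size s <= n)%N.
Variables (cls : X -> X) (E : seq X).
Hypothesis clsE : forall x, cls x \in E.
Hypothesis clsP : forall x y, cls x = cls y ->
  forall m, mdist (iter m g x) (iter m g y) <= c.

Lemma comb (s : seq X) : uniq s -> (size s <= size E * n)%N.
Proof.
move=> us; rewrite leqNgt; apply/negP => big.
pose good a b := forall T, exists t, (T <= t)%N /\ cls (iter t f a) = cls (iter t f b).
have [T HT] : exists T, forall a, a \in s -> forall t, (T <= t)%N -> forall b, b \in s ->
    good a b \/ cls (iter t f a) <> cls (iter t f b).
  apply: (@fin_bound _ s (fun a t => forall b, b \in s ->
    good a b \/ cls (iter t f a) <> cls (iter t f b))) => a _.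
  suff [Ta HTa] : exists T, forall b, b \in s -> forall t, (T <= t)%N ->
      good a b \/ cls (iter t f a) <> cls (iter t f b).
    by exists Ta => t Tt b bs; apply: HTa.
  apply: fin_bound => b _.
  case: (pselect (good a b)) => [gab|ngab].
    by exists 0%N => t _; left.
  move/existsNP: ngab => [T0 HT0]; exists T0 => t Tt; right => E1.
  by apply: HT0; exists t.
have [e eE He] : exists2 e, e \in E & (n < count (fun a => cls (iter T f a) == e) s)%N.
  apply: contrapT => H.
  have : (count (fun a => cls (iter T f a) \in E) s <= size E * n)%N.
    apply: (@pigeon _ _ (fun a => cls (iter T f a))) => e' e'E.
    rewrite leqNgt; apply/negP => hc; apply: H; by exists e'.
  rewrite (eq_count (a2 := predT)) ?count_predT; last by move=> a; rewrite /= clsE.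
  by rewrite leqNgt big.
set s' := [seq a <- s | cls (iter T f a) == e].
have szs' : size s' = count (fun a => cls (iter T f a) == e) s by rewrite size_filter.
case Es' : s' => [|a0 r0].
  by move: He; rewrite -szs' Es'.
have a0s' : a0 \in s' by rewrite Es' mem_head.
move: (a0s'); rewrite mem_filter => /andP[/eqP a0e a0s].
have : (size s' <= n)%N.
  apply: (expans a0); first by rewrite filter_uniq.
  move=> y; rewrite mem_filter => /andP[/eqP ye ys] k.
  have [] := HT a0 a0s T (leqnn T) y ys; last by rewrite a0e ye => /(_ erefl).
  move=> /(_ k) [t [kt Et]].
  have := clsP _ _ (esym Et) (t - k).
  by rewrite !iter_back.
by rewrite szs' leqNgt He.
Qed.

End Comb.

Lemma enum_ex (T : eqType) (P : set T) (n : nat) :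
  (forall s : seq T, uniq s -> (forall y, y \in s -> P y) -> (size s <= n)%N) ->
  exists e : seq T, forall z, P z -> z \in e.
Proof.
move=> H; apply: contrapT => /forallNP H1.
have H2 : forall e : seq T, exists z, P z /\ z \notin e.
  move=> e; have /existsNP [z hz] := H1 e; exists z.
  by split; [apply: contrapT => Pz; apply: hz|apply/negP => ze; apply: hz].
have H3 : forall m, exists s : seq T, [/\ uniq s, (forall y, y \in s -> P y) & size s = m].
  elim=> [|m [s [us Ps ss]]]; first by exists [::].
  have [z [Pz zs]] := H2 s.
  exists (z :: s); split => //=; first by rewrite zs us.
    by move=> y; rewrite inE => /orP[/eqP ->|]; [|apply: Ps].
  by rewrite ss.
have [s [us Ps ss]] := H3 n.+1.
by have := H s us Ps; rewrite ss ltnn.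
Qed.

Section PtCover.
Context {R : realType} {X : metricType R} (x0 : X).
HB.instance Definition _ := isPointed.Build X x0.
Lemma cover_fin (r : R) : 0 < r -> compact [set: X] ->
  finite_subset_cover [set: X] (fun p => interior (ball p r)) [set: X].
Proof.
move=> r0 cptX.
move: cptX; rewrite (@compact_cover X) => /(_ X [set: X] (fun p => interior (ball p r))); apply.
  by move=> i _; exact: open_interior.
move=> x _; exists x => //.
exact: nbhsx_ballx.
Qed.
End PtCover.

Theorem theoremA (R : realType) (X : metricType R) (f g : X -> X) (n : nat) :
  compact [set: X] ->
  continuous f -> continuous g -> cancel f g -> cancel g f ->
  (1 <= n)%N ->
  pos_n_expansive f n ->
  L_shadowing f g ->
  finite_set [set: X].
Proof.
move=> cptX fc gc fgK gfK n1 [c c0 expans] Lsh.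
case: (pselect (exists x : X, True)) => [[x0 _]|nX]; last first.
  have -> : [set: X] = set0.
    by apply/seteqP; split => x // _; apply: nX; exists x.
  exact: finite_set0.
pose eps := c / 4.
have eps0 : 0 < eps by rewrite divr_gt0.
have epsc : eps <= c by rewrite /eps; lra.
have [delta delta0 shad] := Lsh eps eps0.
pose r := Num.min delta eps.
have r0 : 0 < r by rewrite lt_min delta0 eps0.
have rd : r <= delta by rewrite ge_min lexx.
have re : r <= eps by rewrite ge_min lexx orbT.
have [D' _ cov] := @cover_fin R X x0 r r0 cptX.
have near : forall x, exists p, p \in enum_fset D' /\ mdist p x < r.
  move=> x; have [p /= pD' px] := cov x I.
  exists p; split => //.
  have := nbhs_singleton px.
  by rewrite ballEmdist.
have en : forall p : X, {e : seq X | forall z, stable_set f c p z -> z \in e}.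
  move=> p; apply: cid; apply: (@enum_ex X (stable_set f c p) n).
  by move=> s us Hs; exact: expans p s us Hs.
pose E := flatten [seq sval (en p) | p <- enum_fset D'].
have shz : forall x, exists z, z \in E /\ forall m, mdist (iter m g z) (iter m g x) < eps + eps.
  move=> x; have [p [pD px]] := near x.
  pose xs := fun k : int => match k with Posz m => iter m f p | Negz m => iter m.+1 g x end.
  have step : forall k, k <> Negz 0 -> mdist (f (xs k)) (xs (k + 1)) = 0.
    case=> [m|[|m]] // _.
      rewrite (_ : Posz m + 1 = Posz m.+1); last by rewrite -addn1 PoszD.
      by rewrite /xs -iterS mdistxx.
    rewrite (_ : Negz m.+1 + 1 = Negz m); last by rewrite !NegzE; lia.
    by rewrite /xs iterS gfK mdistxx.
  have step0 : mdist (f (xs (Negz 0))) (xs (Negz 0 + 1)) = mdist x p.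
    by rewrite /xs /= gfK.
  have [z [zsh _]] : exists z, eps_shadows f g eps z xs /\ limit_shadows f g z xs.
    apply: shad.
    - move=> k; case: (eqVneq k (Negz 0)) => [->|kN].
        by rewrite step0 metric_sym (lt_le_trans px rd).
      by rewrite step ?delta0 //; apply/eqP.
    - move=> e e0; exists 2%N => k hk; rewrite step //.
      by move=> kE; rewrite kE in hk.
  exists z; split.
    apply/flatten_mapP; exists p => //.
    apply: (svalP (en p)) => k.
    by have := zsh (Posz k) => /ltW h; apply: le_trans h epsc.
  case=> [|m].
    have h1 := zsh (Posz 0).
    have h2 := metric_triangle z p x.
    rewrite /=; rewrite /= in h1.
    have h3 : mdist p x < eps by apply: lt_le_trans px re.
    by apply: le_lt_trans h2 _; apply: ltrD.
  have h1 := zsh (Negz m); rewrite /= in h1.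
  by apply: lt_le_trans h1 _; rewrite lerDl ltW.
pose cls x := sval (cid (shz x)).
have clsE : forall x, cls x \in E := fun x => (svalP (cid (shz x))).1.
have clsP : forall x y, cls x = cls y -> forall m, mdist (iter m g x) (iter m g y) <= c.
  move=> x y Exy m.
  have hx := (svalP (cid (shz x))).2 m.
  have hy := (svalP (cid (shz y))).2 m.
  rewrite -/(cls x) in hx; rewrite -/(cls y) -Exy in hy.
  have h := metric_triangle (iter m g x) (iter m g (cls x)) (iter m g y).
  rewrite metric_sym in hx.
  have e4 : eps * 4 = c by rewrite /eps mulfVK // pnatr_eq0.
  apply: (le_trans h); lra.
have bound := @comb R X f g c n fgK expans cls E clsE clsP.
apply: contrapT => infX.
have [B _ cB] := @infinite_set_fset _ _ (size E * n).+1 infX.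
have := bound _ (fset_uniq B).
by rewrite leqNgt cB.
Qed.
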